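(* Fix an integer $g \ge 0$. For any $0 < c_1 < 1$ and $c_2 > 1$ we have $$p^{c_1/p} < r_{(g,p)} < p^{c_2/p} \quad \text{for all sufficiently large } p.$$ In particular $\displaystyle\lim_{p \to \infty} \frac{p \log r_{(g,p)}}{\log p} = 1$.
   Context: For nonnegative integers $g,p$ let $$B_{(g,p)}(t) = t^{2p+1}(t^{2g+1}-1) + 1 - 2t^{p+g+1} - t^{2g+1},$$ and let $r_{(g,p)}$ be the unique real root of $B_{(g,p)}(t)$ greater than $1$. *)

(* Defs.v *)
From Stdlib Require Import Reals ClassicalEpsilon.
From Coquelicot Require Import Coquelicot.
Open Scope R_scope.

Definition B (g p : nat) (t : R) : R :=
  t ^ (2 * p + 1) * (t ^ (2 * g + 1) - 1) + 1
  - 2 * t ^ (p + g + 1) - t ^ (2 * g + 1).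

Definition r (g p : nat) : R :=
  epsilon (inhabits 0) (fun t => 1 < t /\ B g p t = 0).

(* Main.v *)
Require Import Defs.
From Stdlib Require Import Reals Lra Lia ClassicalEpsilon.
From Coquelicot Require Import Coquelicot.
Open Scope R_scope.

Lemma Bform g p t : B g p t =
  t * t^p * t^p * (t^g*t^g*t - 1) + 1 - 2 * t^p * t^g * t - t^g*t^g*t.
Proof.
  unfold B.
  replace (2*p+1)%nat with (p+p+1)%nat by lia.
  replace (2*g+1)%nat with (g+g+1)%nat by lia.
  replace (p+g+1)%nat with (p+g+1)%nat by lia.
  rewrite !pow_add. simpl. ring.
Qed.

Lemma wform g t : t^(2*g+1) = t^g*t^g*t.
Proof. replace (2*g+1)%nat with (g+g+1)%nat by lia. rewrite !pow_add. simpl; ring. Qed.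

Lemma Bneg g p t : 1 < t -> t^p*(t^(2*g+1)-1) <= 2 -> B g p t < 0.
Proof.
  intros Ht H. rewrite wform in H. rewrite Bform.
  assert (Hv: 1 <= t^g) by (apply pow_R1_Rle; lra).
  assert (Hu: 1 <= t^p) by (apply pow_R1_Rle; lra).
  set (u := t^p) in *. set (v := t^g) in *.
  assert (Hvv: 1 <= v*v) by nra.
  assert (Hw: 1 < v*v*t) by nra.
  assert (Htu : 0 < t*u) by nra.
  assert (HX: u*(v*v*t-1) - 2*v <= 0) by lra.
  assert (t*u*(u*(v*v*t-1) - 2*v) <= 0).
  { assert (0 <= t*u*(-(u*(v*v*t-1) - 2*v))) by (apply Rmult_le_pos; lra). lra. }
  nra.
Qed.


Lemma Bpos g p t : 1 < t -> t^p*(t-1) > 3 -> 0 < B g p t.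
Proof.
  intros Ht H. rewrite Bform.
  assert (Hv: 1 <= t^g) by (apply pow_R1_Rle; lra).
  assert (Hu: 1 <= t^p) by (apply pow_R1_Rle; lra).
  set (u := t^p) in *. set (v := t^g) in *.
  assert (Hvv: v <= v*v) by nra.
  set (w := v*v*t).
  assert (Hwt: t <= w) by (unfold w; nra).
  assert (Hvt: v*t <= w) by (unfold w; nra).
  assert (Hw0: 0 < w) by lra.
  assert (H1: t*u*(w-1) >= u*w*(t-1)) by nra.
  assert (H2: u*w*(t-1) > 3*w) by nra.
  assert (H3: t*u*(w-1) > 2*v*t + w) by lra.
  assert (H4: u*(t*u*(w-1)) > u*(2*v*t + w)) by (apply Rmult_lt_compat_l; lra).
  nra.
Qed.

Lemma expow z n : exp z ^ n = exp (INR n * z).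
Proof. rewrite <- Rpower_pow by apply exp_pos. unfold Rpower. rewrite ln_exp. reflexivity. Qed.

Lemma upper_q c2 s P : 1 < c2 -> 1 <= s -> 3/(c2*(c2-1)) < s -> P = exp s ->
  exp (c2*s) * (exp (c2*s/P) - 1) > 3.
Proof.
  intros Hc Hs HK HP.
  assert (HP0: 0 < P) by (rewrite HP; apply exp_pos).
  assert (H1: exp (c2*s/P) - 1 > c2*s/P).
  { assert (c2*s/P <> 0). { apply Rgt_not_eq. apply Rdiv_lt_0_compat; nra. }
    pose proof (exp_ineq1 _ H). lra. }
  assert (H2: exp (c2*s) / P = exp ((c2-1)*s)).
  { rewrite HP. replace (c2*s) with ((c2-1)*s + s) by ring. rewrite exp_plus. field. apply Rgt_not_eq, exp_pos. }
  assert (H3: exp ((c2-1)*s) > (c2-1)*s).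
  { pose proof (exp_ineq1_le ((c2-1)*s)). lra. }
  assert (H4: c2*(c2-1)*s > 3).
  { apply Rmult_lt_reg_r with (/(c2*(c2-1))). apply Rinv_0_lt_compat; nra.
    replace (c2*(c2-1)*s*/(c2*(c2-1))) with s by (field; nra). unfold Rdiv in HK. lra. }
  assert (Hpos: 0 < exp (c2*s)) by apply exp_pos.
  assert (exp (c2*s) * (exp (c2*s/P) - 1) >= exp (c2*s) * (c2*s/P)) by nra.
  assert (exp (c2*s) * (c2*s/P) = c2*s*(exp (c2*s)/P)) by (field; lra).
  rewrite H2 in H0.
  assert (c2*s*exp ((c2-1)*s) > c2*s*((c2-1)*s)) by (apply Rmult_lt_compat_l; nra).
  nra.
Qed.

Lemma exp_sq x : 0 <= x -> x*x/4 < exp x.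
Proof.
  intros Hx. replace x with (x/2 + x/2) at 3 by field. rewrite exp_plus.
  pose proof (exp_ineq1_le (x/2)). nra.
Qed.

Lemma expm1_le y : 0 <= y <= 1 -> exp y - 1 <= 3*y.
Proof.
  intros Hy. pose proof (exp_ineq1_le (-y)).
  assert (E: exp (-y) * exp y = 1) by (rewrite <- exp_plus; replace (-y+y) with 0 by ring; apply exp_0).
  assert (Hey: exp y <= 3).
  { apply Rle_trans with (exp 1). destruct (Req_dec y 1). subst; lra.
    left; apply exp_increasing; lra. apply exp_le_3. }
  assert (0 < exp y) by apply exp_pos.
  assert ((1 - y) * exp y <= 1) by nra.
  nra.
Qed.

Lemma lower_q c1 a s P : 0 < c1 < 1 -> 1 <= a ->
  4*a*c1 + 6*a*c1/((1-c1)*(1-c1)) + 1 <= s -> P = exp s ->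
  exp (c1*s) * (exp (a*c1*s/P) - 1) <= 2.
Proof.
  intros Hc Ha Hs HP.
  set (d := 1 - c1).
  assert (Hd: 0 < d) by (unfold d; lra).
  assert (Hq: 0 <= 6*a*c1/(d*d)).
  { apply Rmult_le_pos. nra. left; apply Rinv_0_lt_compat; nra. }
  fold d in Hs.
  assert (Hac: 0 <= a*c1) by nra.
  assert (Hs0: 1 <= s) by lra.
  assert (HP0: 0 < P) by (rewrite HP; apply exp_pos).
  assert (HPs: s*s/4 < P) by (rewrite HP; apply exp_sq; lra).
  set (y := a*c1*s/P).
  assert (Hy0: 0 <= y) by (unfold y; apply Rmult_le_pos; [nra| left; apply Rinv_0_lt_compat; lra]).
  assert (Hy1: y <= 1).
  { unfold y. apply Rmult_le_reg_r with P; auto. unfold Rdiv. rewrite Rmult_assoc, Rinv_l by lra.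
    assert (4*a*c1 <= s) by lra.
    assert (a*c1*s*4 <= s*s) by nra. lra. }
  pose proof (expm1_le y (conj Hy0 Hy1)) as Hm.
  assert (Hpos: 0 < exp (c1*s)) by apply exp_pos.
  assert (H1: exp (c1*s) * (exp y - 1) <= exp (c1*s) * (3*y)) by (apply Rmult_le_compat_l; lra).
  assert (H2: exp (c1*s) * (3*y) = 3*a*c1*s / exp (d*s)).
  { unfold y. rewrite HP. replace s with (c1*s + d*s) at 3 by (unfold d; ring).
    rewrite exp_plus. field. split; apply Rgt_not_eq, exp_pos. }
  assert (H3: (d*s)*(d*s)/4 < exp (d*s)) by (apply exp_sq; nra).
  assert (H4: 6*a*c1 <= d*d*s).
  { apply Rle_trans with (d*d*(6*a*c1/(d*d))). right. field. lra.
    apply Rmult_le_compat_l; nra. }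
  assert (H5: 3*a*c1*s / exp (d*s) <= 2).
  { assert (0 < exp (d*s)) by apply exp_pos.
    apply Rmult_le_reg_r with (exp (d*s)); auto. unfold Rdiv. rewrite Rmult_assoc, Rinv_l by lra.
    nra. }
  lra.
Qed.

Lemma B1 g p : B g p 1 = -2.
Proof. unfold B. rewrite !pow1. ring. Qed.

Lemma Bcont g p : continuity (B g p).
Proof. unfold B. reg. Qed.

Lemma main1 (g : nat) (c1 c2 : R) : 0 < c1 < 1 -> 1 < c2 ->
     exists N : nat, forall p : nat, (N <= p)%nat ->
       Rpower (INR p) (c1 / INR p) < r g p /\
       r g p < Rpower (INR p) (c2 / INR p).
Proof.
  intros Hc1 Hc2.
  set (a := INR (2*g+1)).
  assert (Ha: 1 <= a) by (unfold a; replace 1 with (INR 1) by reflexivity; apply le_INR; lia).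
  set (Kl := 4*a*c1 + 6*a*c1/((1-c1)*(1-c1)) + 1).
  set (Ku := 1 + 3/(c2*(c2-1))).
  assert (HKl: 0 <= 4*a*c1 + 6*a*c1/((1-c1)*(1-c1))).
  { assert (0 <= 6*a*c1/((1-c1)*(1-c1))). { apply Rmult_le_pos. nra. left; apply Rinv_0_lt_compat; nra. } nra. }
  assert (HKu: 0 <= 3/(c2*(c2-1))).
  { apply Rmult_le_pos. lra. left; apply Rinv_0_lt_compat; nra. }
  destruct (INR_unbounded (exp (Kl + Ku))) as [N HN].
  exists N. intros p Hp.
  set (P := INR p).
  assert (HPN: INR N <= P) by (apply le_INR; auto).
  assert (HP0: 0 < P) by (pose proof (exp_pos (Kl+Ku)); lra).
  set (s := ln P).
  assert (HPs: P = exp s) by (unfold s; rewrite exp_ln; auto).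
  assert (Hs: Kl + Ku < s).
  { unfold s. rewrite <- (ln_exp (Kl+Ku)). apply ln_increasing. apply exp_pos. lra. }
  assert (Ht1: Rpower P (c1/P) = exp (c1*s/P)) by (unfold Rpower, s; f_equal; field; lra).
  assert (Ht2: Rpower P (c2/P) = exp (c2*s/P)) by (unfold Rpower, s; f_equal; field; lra).
  rewrite Ht1, Ht2.
  set (t1 := exp (c1*s/P)). set (t2 := exp (c2*s/P)).
  assert (Ht1p: t1 ^ p = exp (c1*s)) by (unfold t1; rewrite expow; f_equal; fold P; field; lra).
  assert (Ht2p: t2 ^ p = exp (c2*s)) by (unfold t2; rewrite expow; f_equal; fold P; field; lra).
  assert (Ht1a: t1 ^ (2*g+1) = exp (a*c1*s/P)) by (unfold t1; rewrite expow; f_equal; fold a; field; lra).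
  assert (Hs0 : 0 < s) by (unfold Kl, Ku in Hs; lra).
  assert (Ht1g: 1 < t1).
  { unfold t1. rewrite <- exp_0. apply exp_increasing. apply Rdiv_lt_0_compat; nra. }
  assert (Ht2g: 1 < t2).
  { unfold t2. rewrite <- exp_0. apply exp_increasing. apply Rdiv_lt_0_compat; nra. }
  assert (HU: t2^p * (t2 - 1) > 3).
  { rewrite Ht2p. unfold t2. apply upper_q; auto; unfold Kl, Ku in Hs; lra. }
  assert (HL: t1^p * (t1^(2*g+1) - 1) <= 2).
  { rewrite Ht1p, Ht1a. apply lower_q; auto. unfold Kl, Ku in Hs; lra. }
  assert (Hex: exists x, 1 < x /\ B g p x = 0).
  { destruct (IVT (B g p) 1 t2 (Bcont g p) Ht2g) as [z [Hz1 Hz2]].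
    rewrite B1; lra. apply Bpos; auto.
    exists z. split; auto. destruct Hz1 as [Hz1 _]. destruct Hz1; auto. subst z. rewrite B1 in Hz2. lra. }
  pose proof (epsilon_spec (inhabits 0) _ Hex) as [Hr1 Hr2].
  fold (r g p) in Hr1, Hr2.
  set (x := r g p) in *.
  split.
  - destruct (Rlt_le_dec t1 x) as [H|H]; auto. exfalso.
    assert (B g p x < 0); [|lra].
    apply Bneg; auto.
    apply Rle_trans with (t1^p * (t1^(2*g+1) - 1)); auto.
    assert (x^p <= t1^p) by (apply pow_incr; lra).
    assert (x^(2*g+1) <= t1^(2*g+1)) by (apply pow_incr; lra).
    assert (1 <= x^(2*g+1)) by (apply pow_R1_Rle; lra).
    apply Rmult_le_compat; try lra. apply pow_le; lra.
  - destruct (Rlt_le_dec x t2) as [H|H]; auto. exfalso.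
    assert (0 < B g p x); [|lra].
    apply Bpos; auto.
    assert (t2^p <= x^p) by (apply pow_incr; lra).
    assert (t2^p * (t2 - 1) <= x^p * (x-1)). { apply Rmult_le_compat; try lra. apply pow_le; lra. }
    lra.
Qed.

Theorem lemma4p1 (g : nat) :
  (forall c1 c2 : R, 0 < c1 < 1 -> 1 < c2 ->
     exists N : nat, forall p : nat, (N <= p)%nat ->
       Rpower (INR p) (c1 / INR p) < r g p /\
       r g p < Rpower (INR p) (c2 / INR p))
  /\ is_lim_seq (fun p : nat => INR p * ln (r g p) / ln (INR p)) 1.
Proof.
  split. { intros; apply main1; auto. }
  apply is_lim_seq_spec. intros eps.
  set (c1 := Rmax (1/2) (1 - eps/2)). set (c2 := 1 + eps/2).
  pose proof (cond_pos eps) as He.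
  assert (Hc1: 0 < c1 < 1).
  { unfold c1. split. apply Rlt_le_trans with (1/2). lra. apply Rmax_l.
    apply Rmax_lub_lt; lra. }
  assert (Hc1': 1 - eps/2 <= c1) by apply Rmax_r.
  destruct (main1 g c1 c2 Hc1 ltac:(unfold c2; lra)) as [N HN].
  exists (max N 2). intros p Hp.
  destruct (HN p ltac:(lia)) as [H1 H2].
  set (P := INR p) in *.
  assert (HP: 2 <= P) by (unfold P; replace 2 with (INR 2) by (simpl; ring); apply le_INR; lia).
  assert (Hs: 0 < ln P) by (rewrite <- ln_1; apply ln_increasing; lra).
  assert (Hr0: 0 < Rpower P (c1/P)) by (unfold Rpower; apply exp_pos).
  assert (Hrr: 0 < r g p) by lra.
  apply ln_increasing in H1; auto.
  apply ln_increasing in H2; [|lra].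
  rewrite ln_Rpower in H1, H2.
  assert (E: forall c, c / P * ln P * (P / ln P) = c) by (intro; field; lra).
  assert (Hk: 0 < P / ln P) by (apply Rdiv_lt_0_compat; lra).
  assert (L1: c1 < ln (r g p) * (P / ln P)).
  { rewrite <- (E c1). apply Rmult_lt_compat_r; auto. }
  assert (L2: ln (r g p) * (P / ln P) < c2).
  { rewrite <- (E c2). apply Rmult_lt_compat_r; auto. }
  replace (P * ln (r g p) / ln P) with (ln (r g p) * (P / ln P)) by (field; lra).
  apply Rabs_def1; unfold c2 in L2; lra.
Qed.
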